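(* Let $n\ge2$, $\tau_1,\dots,\tau_n\in\mathbb{C}$, $\vartheta\notin-\mathbb{N}$ (and $\vartheta\neq0$). Then, as identities of formal power series in the variables $z_{j,k}$ ($1\le k<j\le n$): for $1\le r_1<r_2\le n-1$, $$\partial_{z_{r_2,r_1}}(\mathcal{X}_A)=\sum_{s=1}^{r_1}\tau_sP_{[s,r_1]}\,\mathcal{X}_A[s,r_2],$$ and for $r\in\{1,\dots,n-1\}$, $$\partial_{z_{n,r}}(\mathcal{X}_A)=\frac{\tau_n}{\vartheta}\sum_{s=1}^{r}\tau_sP_{[s,r]}\,\mathcal{X}_A[s,n].$$
   Context: $(c)_i=c(c+1)\cdots(c+i-1)$. $\Gamma_A=\bigoplus_{1\le j<i\le n}\mathbb{N}\epsilon_{i,j}$; for $\beta\in\Gamma_A$: $\beta_{\underline 1}=0$, $\beta_{\underline i}=\sum_{r=1}^{i-1}\beta_{i,r}$, $\beta_{\overline n}=0$, $\beta_{\overline j}=\sum_{s=j+1}^n\beta_{s,j}$, $\beta!=\prod\beta_{j,k}!$, $z^\beta=\prod z_{j,k}^{\beta_{j,k}}$. $\mathcal{X}_A=\mathcal{X}_A(\tau_1,\dots,\tau_n;\vartheta)\{z_{j,k}\}=\sum_{\beta\in\Gamma_A}\frac{\left[\prod_{s=1}^{n-1}(\tau_s-\beta_{\underline s})_{\beta_{\overline s}}\right](\tau_n)_{\beta_{\underline n}}}{\beta!\,(\vartheta)_{\beta_{\underline n}}}z^\beta$. For $1\le i<j\le n-1$, $\mathcal{X}_A[i,j]$ is $\mathcal{X}_A$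 with $\tau_i$ replaced by $\tau_i+1$ and $\tau_j$ by $\tau_j-1$; for $k\le n-1$, $\mathcal{X}_A[k,n]$ is $\mathcal{X}_A$ with $\tau_k\to\tau_k+1$, $\tau_n\to\tau_n+1$, $\vartheta\to\vartheta+1$ (and $\mathcal{X}_A[k,k]$, $\mathcal X_A[k,n]$ for the evident index ranges are defined by these rules). Path polynomials: for positive integers $k_1<k_2$, a path from $k_1$ to $k_2$ is a sequence $k_1=m_0<m_1<\cdots<m_r=k_2$, and $P_{[k_1,k_2]}=\sum_{\text{paths}}(-1)^rz_{m_1,m_0}z_{m_2,m_1}\cdots z_{m_r,m_{r-1}}$; $P_{[k,k]}=1$. *)

(* Defs.v *)
From HB Require Import structures.
From mathcomp Require Import all_boot all_algebra.
From mathcomp Require Import reals realfun.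
From mathcomp Require Export complex.

Set Implicit Arguments.
Unset Strict Implicit.
Unset Printing Implicit Defensive.

Import GRing.Theory Num.Theory.
Local Open Scope ring_scope.

Section FPS.
Variable C : fieldType.
Variable n : nat.

(* Variables z_{j,k}, 1 <= k < j <= n, encoded 0-based as pairs (j-1,k-1). *)
Definition var := {p : 'I_n * 'I_n | (p.2 < p.1)%N}.

Definition mexp := {ffun var -> nat}.

Definition fps := mexp -> C.

(* beta_{j,k} with 1-based indices (0 if (j,k) is not a variable). *)
Definition ex (b : mexp) (j k : nat) : nat :=
  \sum_(v : var | ((val v).1.+1 == j) && ((val v).2.+1 == k)) b v.

Definition unit_exp (j k : nat) : mexp :=
  [ffun v : var => (((val v).1.+1 == j) && ((val v).2.+1 == k) : nat)].

Definition mexp0 : mexp := [ffun _ => 0%N].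
Definition mexp_add (a b : mexp) : mexp := [ffun v => (a v + b v)%N].
Definition mexp_sub (a b : mexp) : mexp := [ffun v => (a v - b v)%N].
Definition mexp_le (a b : mexp) : bool := [forall v, (a v <= b v)%N].

Definition under (b : mexp) (i : nat) : nat := \sum_(1 <= r < i) ex b i r.
Definition over (b : mexp) (j : nat) : nat := \sum_(j.+1 <= s < n.+1) ex b s j.
Definition mfact (b : mexp) : nat := \prod_(v : var) (b v)`!.

Definition rising (c : C) (i : nat) : C := \prod_(0 <= t < i) (c + t%:R).

(* X_A(tau_1,...,tau_n; theta); tau is 1-based (tau 0 is unused). *)
Definition XA (tau : nat -> C) (th : C) : fps := fun b =>
  (\prod_(1 <= s < n) rising (tau s - (under b s)%:R) (over b s))
  * rising (tau n) (under b n)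
  / ((mfact b)%:R * rising th (under b n)).

Definition upd (tau : nat -> C) (i : nat) (c : C) : nat -> C :=
  fun s => if s == i then c else tau s.

Definition XAsh (tau : nat -> C) (th : C) (i j : nat) : fps :=
  if (j < n)%N then
    XA (upd (upd tau i (tau i + 1)) j (tau j - 1)) th
  else
    XA (upd (upd tau i (tau i + 1)) n (tau n + 1)) (th + 1).

Definition dz (j k : nat) (f : fps) : fps := fun b =>
  ((ex b j k).+1)%:R * f (mexp_add b (unit_exp j k)).

Definition poly_terms := seq (C * mexp).

Definition pmul (p : poly_terms) (f : fps) : fps := fun b =>
  \sum_(t <- p) (if mexp_le t.2 b then t.1 * f (mexp_sub b t.2) else 0).

Definition fps_add (f g : fps) : fps := fun b => f b + g b.
Definition fps_scale (c : C) (f : fps) : fps := fun b => c * f b.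
Definition fps0 : fps := fun _ => 0.

Fixpoint subseqs (T : Type) (s : seq T) : seq (seq T) :=
  if s is x :: s' then [seq x :: t | t <- subseqs s'] ++ subseqs s'
  else [:: [::]].

(* paths k1 = m_0 < m_1 < ... < m_r = k2, listed as [:: m_1; ...; m_r] *)
Definition paths (k1 k2 : nat) : seq (seq nat) :=
  if (k1 < k2)%N then [seq rcons t k2 | t <- subseqs (iota k1.+1 (k2 - k1.+1))]
  else [::].

Definition path_mono (k1 : nat) (p : seq nat) : mexp :=
  foldr mexp_add mexp0 (pairmap (fun a b => unit_exp b a) k1 p).

Definition Ppath (k1 k2 : nat) : poly_terms :=
  if k1 == k2 then [:: (1, mexp0)]
  else [seq ((-1) ^+ size p, path_mono k1 p) | p <- paths k1 k2].

End FPS.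

Arguments XA {C} n tau th b.
Arguments XAsh {C} n tau th i j b.
Arguments dz {C} n j k f b.
Arguments Ppath {C} n k1 k2.
Arguments pmul {C} {n} p f b.
Arguments fps_add {C} {n} f g b.
Arguments fps_scale {C} {n} c f b.
Arguments fps0 {C} {n} b.

(* Main.v *)
Require Import Defs.
From mathcomp Require Import all_boot all_algebra.
From mathcomp Require Import reals realfun complex.
From mathcomp Require Import ring zify.
From Stdlib Require Import FunctionalExtensionality.
Import GRing.Theory Num.Theory.
Local Open Scope ring_scope.

Section Comb.
Variable n : nat.

Lemma exv (j k : nat) : (1 <= k)%N -> (k < j)%N -> (j <= n)%N ->
  exists v : var n, forall w : var n,
    ((val w).1.+1 == j) && ((val w).2.+1 == k) = (w == v).
Proof.
move=> k1 kj jn.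
have Hj : (j.-1 < n)%N by lia.
have Hk : (k.-1 < n)%N by lia.
have Hkj : ((Ordinal Hj, Ordinal Hk).2 < (Ordinal Hj, Ordinal Hk).1)%N by rewrite /=; lia.
exists (exist _ (Ordinal Hj, Ordinal Hk) Hkj) => w.
rewrite -val_eqE /=.
case: w => [[a b] /= _].
rewrite xpair_eqE -!val_eqE /=.
apply/idP/idP => /andP [/eqP H1 /eqP H2]; apply/andP; split; apply/eqP; lia.
Qed.

Lemma sum_delta (a c k : nat) : (a <= k < c)%N ->
  (\sum_(a <= r < c) (r == k : nat))%N = 1%N.
Proof.
move=> H.
rewrite (bigD1_seq k) ?mem_index_iota ?iota_uniq //= eqxx big1 //.
by move=> i /negbTE ->.
Qed.

Lemma ex_add (a c : mexp n) i r : ex (mexp_add a c) i r = (ex a i r + ex c i r)%N.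
Proof. by rewrite /ex -big_split; apply: eq_bigr => v _; rewrite ffunE. Qed.

Lemma ex_unit j k i r : (1 <= k)%N -> (k < j)%N -> (j <= n)%N ->
  ex (unit_exp n j k) i r = ((i == j) && (r == k) : nat).
Proof.
move=> k1 kj jn; have [v Hv] := exv j k k1 kj jn.
rewrite /ex.
transitivity (\sum_(w : var n | ((val w).1.+1 == i) && ((val w).2.+1 == r)) (w == v : nat))%N.
  by apply: eq_bigr => w _; rewrite ffunE Hv.
rewrite big_mkcond (bigD1 v) //= big1 => [|w /negbTE ->]; last by case: ifP.
have := Hv v; rewrite eqxx => /andP [/eqP <- /eqP <-].
by rewrite addn0 !(eq_sym i) !(eq_sym r); case: ifP.
Qed.

Lemma ex_val j k (b : mexp n) : (1 <= k)%N -> (k < j)%N -> (j <= n)%N ->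
  exists v : var n, ex b j k = b v /\ forall w, unit_exp n j k w = (w == v : nat).
Proof.
move=> k1 kj jn; have [v Hv] := exv j k k1 kj jn.
exists v; split; last by move=> w; rewrite ffunE Hv.
by rewrite /ex (eq_bigl (pred1 v)) ?big_pred1_eq // => w; rewrite Hv.
Qed.

Lemma under_add (a c : mexp n) i :
  Defs.under (mexp_add a c) i = (Defs.under a i + Defs.under c i)%N.
Proof. by rewrite /Defs.under -big_split; apply: eq_bigr => r _; rewrite ex_add. Qed.

Lemma over_add (a c : mexp n) i :
  Defs.over (mexp_add a c) i = (Defs.over a i + Defs.over c i)%N.
Proof. by rewrite /Defs.over -big_split; apply: eq_bigr => r _; rewrite ex_add. Qed.

Lemma under_unit j k i : (1 <= k)%N -> (k < j)%N -> (j <= n)%N ->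
  Defs.under (unit_exp n j k) i = (i == j : nat).
Proof.
move=> k1 kj jn; rewrite /Defs.under.
under eq_bigr do rewrite ex_unit //.
case: (eqVneq i j) => [->|nij] /=.
  by apply: sum_delta; lia.
by rewrite big1.
Qed.

Lemma over_unit j k i : (1 <= k)%N -> (k < j)%N -> (j <= n)%N ->
  Defs.over (unit_exp n j k) i = (i == k : nat).
Proof.
move=> k1 kj jn; rewrite /Defs.over.
under eq_bigr do rewrite ex_unit //.
case: (eqVneq i k) => [->|nik] /=.
  under eq_bigr do rewrite andbT.
  by apply: sum_delta; lia.
by rewrite big1 // => s _; rewrite andbF.
Qed.

Lemma mfact_add j k (b : mexp n) : (1 <= k)%N -> (k < j)%N -> (j <= n)%N ->
  mfact (mexp_add b (unit_exp n j k)) = (mfact b * (ex b j k).+1)%N.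
Proof.
move=> k1 kj jn; have [v [-> Hv]] := ex_val j k b k1 kj jn.
rewrite /mfact (bigD1 v) //= [in RHS](bigD1 v) //= ffunE Hv eqxx addn1 factS.
have -> : (\prod_(w | w != v) (mexp_add b (unit_exp n j k) w)`!)%N = (\prod_(w | w != v) (b w)`!)%N.
  by apply: eq_bigr => w /negbTE nw; rewrite ffunE Hv nw addn0.
by rewrite [RHS]mulnC mulnA.
Qed.

End Comb.

Section Shift.
Variable C : fieldType.
Variable n : nat.

Definition sh (e : mexp n) (f : fps C n) : fps C n :=
  fun b => if mexp_le e b then f (mexp_sub b e) else 0.

Lemma mexp_le_add (e1 e2 b : mexp n) :
  mexp_le (mexp_add e1 e2) b = mexp_le e2 b && mexp_le e1 (mexp_sub b e2).
Proof.
rewrite /mexp_le; apply/forallP/andP => [H|[/forallP H1 /forallP H2] v].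
  split; apply/forallP => v; have := H v; rewrite !ffunE; lia.
by have := H1 v; have := H2 v; rewrite !ffunE; lia.
Qed.

Lemma sh_add (e1 e2 : mexp n) f b : sh (mexp_add e1 e2) f b = sh e2 (sh e1 f) b.
Proof.
rewrite /sh mexp_le_add; case: (mexp_le e2 b) => //=.
case: ifP => // _; congr f; apply/ffunP => v; rewrite !ffunE; lia.
Qed.

Lemma sh0 f b : sh (mexp0 n) f b = f b.
Proof.
rewrite /sh; have -> : mexp_le (mexp0 n) b by apply/forallP => v; rewrite ffunE.
by congr f; apply/ffunP => v; rewrite !ffunE subn0.
Qed.

Lemma pmulE (p : poly_terms C n) f b : pmul p f b = \sum_(t <- p) t.1 * sh t.2 f b.
Proof. by rewrite /pmul; apply: eq_bigr => t _; rewrite /sh; case: ifP; rewrite ?mulr0. Qed.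

Lemma pmul_ext (p : poly_terms C n) f g : (forall b, f b = g b) -> forall b, pmul p f b = pmul p g b.
Proof. by move=> H b; rewrite /pmul; apply: eq_bigr => t _; rewrite H. Qed.

Lemma pmulD (p : poly_terms C n) f g b :
  pmul p (fun x => f x + g x) b = pmul p f b + pmul p g b.
Proof. rewrite !pmulE -big_split /=; apply: eq_bigr => t _; rewrite /sh; case: ifP => _; rewrite ?mulrDr ?mulr0 ?addr0 //. Qed.

Lemma pmulZ (p : poly_terms C n) c f b :
  pmul p (fun x => c * f x) b = c * pmul p f b.
Proof. by rewrite !pmulE mulr_sumr; apply: eq_bigr => t _; rewrite /sh; case: ifP; rewrite ?mulr0 // mulrCA. Qed.

Lemma pmul_sum (p : poly_terms C n) (I : Type) (r : seq I) (P : pred I) (F : I -> fps C n) b :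
  pmul p (fun x => \sum_(i <- r | P i) F i x) b = \sum_(i <- r | P i) pmul p (F i) b.
Proof.
rewrite pmulE.
have H : forall t : C * mexp n, t.1 * sh t.2 (fun x => \sum_(i <- r | P i) F i x) b =
   \sum_(i <- r | P i) t.1 * sh t.2 (F i) b.
  move=> t; rewrite /sh; case: ifP => _; first by rewrite mulr_sumr.
  by rewrite mulr0 big1 // => i _; rewrite mulr0.
rewrite (eq_bigr _ (fun t _ => H t)) exchange_big /=; apply: eq_bigr => i _; rewrite pmulE //.
Qed.


Section Paths.
Variable r : nat.
Implicit Types (f : fps C n) (b : mexp n).

Definition PM (a : nat) (s : seq nat) (f : fps C n) (b : mexp n) : C :=
  \sum_(t <- subseqs s) (-1) ^+ size (rcons t r) * sh (path_mono n a (rcons t r)) f b.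

Lemma pmul_Pp a f b : (a < r)%N -> pmul (Ppath n a r) f b = PM a (iota a.+1 (r - a.+1)) f b.
Proof. by move=> H; rewrite pmulE /Ppath (ltn_eqF H) /paths H !big_map. Qed.

Lemma pmul_Prr f b : pmul (Ppath n r r) f b = f b.
Proof. by rewrite pmulE /Ppath eqxx big_seq1 /= mul1r sh0. Qed.

Lemma PM_nil a f b : PM a [::] f b = - sh (unit_exp n r a) f b.
Proof. by rewrite /PM /= big_seq1 /= expr1 mulN1r sh_add sh0. Qed.

Lemma PM_cons a x s f b :
  PM a (x :: s) f b = - PM x s (sh (unit_exp n x a) f) b + PM a s f b.
Proof.
rewrite /PM /= big_cat big_map /= -sumrN; congr (_ + _).
apply: eq_bigr => t _; rewrite exprS mulN1r mulNr; congr (- (_ * _)).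
have -> : path_mono n a (x :: rcons t r) = mexp_add (unit_exp n x a) (path_mono n x (rcons t r)) by [].
by rewrite sh_add.
Qed.

Lemma PM_iota L a f b : (a < r - L)%N ->
  PM a (iota (r - L) L) f b =
  - \sum_(r - L <= s < r.+1) pmul (Ppath n s r) (sh (unit_exp n s a) f) b.
Proof.
elim: L a f b => [|L IH] a f b H.
  by rewrite subn0 PM_nil big_nat1 pmul_Prr.
have Hx : ((r - L.+1).+1 = r - L)%N by lia.
rewrite /= PM_cons Hx [X in _ + X]IH; last by lia.
have E : PM (r - L.+1) (iota (r - L) L) (sh (unit_exp n (r - L.+1) a) f) b =
   pmul (Ppath n (r - L.+1) r) (sh (unit_exp n (r - L.+1) a) f) b.
  rewrite pmul_Pp; last by lia.
  by rewrite Hx; congr (PM _ (iota _ _) _ _); lia.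
rewrite E (@big_ltn _ _ _ (r - L.+1)); last by lia.
by rewrite Hx opprD.
Qed.

Lemma Ppath_rec a f b : (a < r)%N ->
  pmul (Ppath n a r) f b =
  - \sum_(a.+1 <= s < r.+1) pmul (Ppath n s r) (sh (unit_exp n s a) f) b.
Proof.
move=> H; rewrite pmul_Pp // -{1}(_ : (r - (r - a.+1) = a.+1)%N); last by lia.
by rewrite PM_iota ?subKn //; lia.
Qed.

End Paths.
End Shift.
Arguments sh {C n} e f b.

Section Comb2.
Variable C : fieldType.
Variable n : nat.

Lemma exch (F : nat -> nat -> C) a r :
  \sum_(a <= s < r) \sum_(a <= k < s) F s k = \sum_(a <= k < r) \sum_(k.+1 <= s < r) F s k.
Proof.
elim: r => [|r IH]; first by rewrite !big_geq.
case: (leqP a r) => Har; last by rewrite !big_geq.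
rewrite big_nat_recr //= IH [RHS]big_nat_recr //= [X in _ = _ + X]big_geq // addr0.
rewrite -big_split /=; apply: eq_big_nat => k Hk.
by rewrite big_nat_recr //=; lia.
Qed.

Lemma comb (D T : nat -> fps C n) r2 :
 (forall m, (1 <= m)%N -> (m < r2)%N -> forall b,
     D m b + \sum_(1 <= k < m) sh (unit_exp n m k) (D k) b = T m b) ->
 forall r, (1 <= r)%N -> (r < r2)%N -> forall b,
   D r b = \sum_(1 <= s < r.+1) pmul (Ppath n s r) (T s) b.
Proof.
move=> HL r r1 rr2 b.
transitivity (\sum_(1 <= s < r.+1) pmul (Ppath n s r)
   (fun x => D s x + \sum_(1 <= k < s) sh (unit_exp n s k) (D k) x) b); last first.
  apply: eq_big_nat => s Hs; apply: pmul_ext => x; apply: HL; lia.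
under eq_bigr do rewrite pmulD pmul_sum.
rewrite big_split /= exch -big_split /=.
rewrite big_nat_recr //= pmul_Prr [X in _ + (_ + X)]big_geq // addr0 big1_seq ?add0r // => k.
rewrite mem_index_iota => /andP [_ Hk].
rewrite Ppath_rec //. set X := \sum_(_ <= _ < _) _. rewrite /X. apply: (@addNr _ X). all: by case/andP: Hk.
Qed.

End Comb2.

Section Local.
Variable C : numFieldType.
Variable n : nat.
Implicit Types (b : mexp n) (tau : nat -> C) (th : C).

Definition Phi tau th (U O : nat -> nat) : C :=
  (\prod_(1 <= s < n) rising (tau s - (U s)%:R) (O s)) * rising (tau n) (U n) / rising th (U n).

Lemma XA_Phi tau th b :
  XA n tau th b = Phi tau th (Defs.under b) (Defs.over b) / (mfact b)%:R.
Proof. by rewrite /XA /Phi invfM [_^-1 * _]mulrC !mulrA. Qed.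

Lemma natS_neq0 k : (k.+1)%:R != 0 :> C.
Proof. by rewrite pnatr_eq0. Qed.

Lemma mfact_neq0 b : (mfact b)%:R != 0 :> C.
Proof.
rewrite pnatr_eq0 -lt0n /mfact; elim/big_ind: _ => //; first by move=> x y; rewrite muln_gt0 => -> ->.
by move=> v _; apply: fact_gt0.
Qed.

Lemma dz_main tau th r2 m b : (1 <= m)%N -> (m < r2)%N -> (r2 <= n)%N ->
  dz n r2 m (XA n tau th) b =
  Phi tau th (fun i => Defs.under b i + (i == r2))%N (fun i => Defs.over b i + (i == m))%N
    / (mfact b)%:R.
Proof.
move=> m1 mr rn.
rewrite /dz XA_Phi mfact_add // natrM.
have -> : Defs.under (mexp_add b (unit_exp n r2 m)) = (fun i => Defs.under b i + (i == r2))%N.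
  by apply: functional_extensionality => i; rewrite under_add under_unit.
have -> : Defs.over (mexp_add b (unit_exp n r2 m)) = (fun i => Defs.over b i + (i == m))%N.
  by apply: functional_extensionality => i; rewrite over_add over_unit.
have := natS_neq0 (ex b r2 m); have := mfact_neq0 b.
move: (Phi _ _ _ _) => P; move: (_%:R) => M; move: (_%:R) => x.
by move=> HM Hx; field; rewrite HM Hx.
Qed.


Lemma mexp_sub_addK (c e : mexp n) : mexp_sub (mexp_add c e) e = c.
Proof. by apply/ffunP => v; rewrite !ffunE addnK. Qed.

Lemma dz_term tau th r2 m k b : (1 <= k)%N -> (k < m)%N -> (m < r2)%N -> (r2 <= n)%N ->
  sh (unit_exp n m k) (dz n r2 k (XA n tau th)) b =
  (ex b m k)%:R * Phi tau th (fun i => Defs.under b i - (i == m) + (i == r2))%N (Defs.over b)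
    / (mfact b)%:R.
Proof.
move=> k1 km mr rn.
have mn : (m <= n)%N by lia.
have [v [Hex Hv]] := ex_val n m k b k1 km mn.
rewrite /sh; case E: (mexp_le _ b); last first.
  have : b v = 0%N.
    apply/eqP; rewrite -leqn0 leqNgt; apply/negP => Hbv; move/negP: E; apply.
    by apply/forallP => w; rewrite Hv; case: eqP => [->|].
  by rewrite -Hex => ->; rewrite !mul0r.
have [c Hc] : exists c, b = mexp_add c (unit_exp n m k).
  exists (mexp_sub b (unit_exp n m k)); apply/ffunP => w; rewrite !ffunE.
  move/forallP: E => /(_ w); rewrite ffunE; case: (_ && _) => /= H; [by rewrite subnK | by rewrite subn0 addn0].
subst b; rewrite mexp_sub_addK /dz XA_Phi.
rewrite mfact_add; [|lia|lia|lia].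
rewrite mfact_add; [|lia|lia|lia].
rewrite ex_add ex_unit // !eqxx addn1 !natrM.
have -> : Defs.under (mexp_add c (unit_exp n r2 k)) =
  (fun i => Defs.under (mexp_add c (unit_exp n m k)) i - (i == m) + (i == r2))%N.
  apply: functional_extensionality => i; rewrite !under_add !under_unit; lia.
have -> : Defs.over (mexp_add c (unit_exp n r2 k)) = Defs.over (mexp_add c (unit_exp n m k)).
  apply: functional_extensionality => i; rewrite !over_add !over_unit //; lia.
have := natS_neq0 (ex c r2 k); have := natS_neq0 (ex c m k); have := mfact_neq0 c.
move: (Phi _ _ _ _) => P; move: (_%:R) => M; move: (_%:R) => x; move: (_%:R) => y.
by move=> HM Hx Hy; field; rewrite HM Hx Hy.
Qed.


Lemma prod1 (F g : nat -> C) a c m : (a <= m < c)%N ->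
  (forall s, (a <= s < c)%N -> s != m -> F s = g s) ->
  \prod_(a <= s < c) F s = F m * \prod_(a <= s < c) (if s == m then 1 else g s).
Proof.
move=> Hm H; rewrite (bigD1_seq m) ?mem_index_iota ?iota_uniq //=; congr (_ * _).
rewrite big_mkcond /=; apply: eq_big_nat => s Hs.
by case: eqP => [//|/eqP nsm]; rewrite /= H.
Qed.

Lemma prod2 (F g : nat -> C) a c m r : (a <= m < c)%N -> (a <= r < c)%N -> m != r ->
  (forall s, (a <= s < c)%N -> s != m -> s != r -> F s = g s) ->
  \prod_(a <= s < c) F s =
  F m * (F r * \prod_(a <= s < c) (if s == m then 1 else if s == r then 1 else g s)).
Proof.
move=> Hm Hr nmr H.
rewrite (@prod1 F (fun s => if s == r then F r else g s) a c m) //; last first.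
  by move=> s Hs nsm; case: eqP => [->|/eqP nsr]; last by apply: H.
congr (_ * _).
rewrite (@prod1 _ (fun s => if s == m then 1 else if s == r then 1 else g s) a c r) //.
  rewrite eq_sym (negbTE nmr) eqxx; congr (_ * _); apply: eq_big_nat => s _.
  by case: (s == r); case: (s == m).
by move=> s Hs nsr; rewrite (negbTE nsr).
Qed.

Lemma risingS (c : C) k : rising c k.+1 = c * rising (c + 1) k.
Proof.
rewrite /rising big_nat_recl //= addr0; congr (_ * _).
by apply: eq_bigr => i _; rewrite -nat1r addrA.
Qed.

Lemma Phi_id1 tau th (U O : nat -> nat) m r2 : (1 <= m)%N -> (m < r2)%N -> (r2 < n)%N ->
  Phi tau th (fun i => U i + (i == r2))%N (fun i => O i + (i == m))%N
  + (U m)%:R * Phi tau th (fun i => U i - (i == m) + (i == r2))%N O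
  = tau m * Phi (upd (upd tau m (tau m + 1)) r2 (tau r2 - 1)) th U O.
Proof.
move=> m1 mr rn.
have nmr : m != r2 by rewrite neq_ltn mr.
have Hm : (1 <= m < n)%N by lia.
have Hr : (1 <= r2 < n)%N by lia.
set g := fun s => rising (tau s - (U s)%:R) (O s).
rewrite /Phi.
rewrite (@prod2 _ g 1 n m r2) //; last first.
  by move=> s _ nsm nsr; rewrite /g (negbTE nsm) (negbTE nsr) !addn0.
rewrite [X in _ + _ * (X * _ / _)](@prod2 _ g 1 n m r2) //; last first.
  by move=> s _ nsm nsr; rewrite /g (negbTE nsm) (negbTE nsr) !addn0 subn0.
rewrite [X in _ = _ * (X * _ / _)](@prod2 _ g 1 n m r2) //; last first.
  by move=> s _ nsm nsr; rewrite /g /upd (negbTE nsm) (negbTE nsr).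
rewrite /upd !eqxx (negbTE nmr) eq_sym (negbTE nmr) (gtn_eqF rn) (gtn_eqF (ltn_trans mr rn)) /=.
rewrite !addn0 !addn1 !subn0 risingS.
have -> : tau r2 - (U r2).+1%:R = tau r2 - 1 - (U r2)%:R by rewrite -natr1; ring.
case: (U m) => [|u].
  by rewrite mul0r addr0 !subr0 !mulrA.
rewrite subn1 /= -natr1.
have -> : tau m - u%:R = tau m - (u%:R + 1) + 1 by ring.
have -> : tau m + 1 - (u%:R + 1) = tau m - (u%:R + 1) + 1 by ring.
ring.
Qed.


Lemma Phi_id2 tau th (U O : nat -> nat) m : (1 <= m)%N -> (m < n)%N ->
  Phi tau th (fun i => U i + (i == n))%N (fun i => O i + (i == m))%N
  + (U m)%:R * Phi tau th (fun i => U i - (i == m) + (i == n))%N O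
  = tau n / th * (tau m * Phi (upd (upd tau m (tau m + 1)) n (tau n + 1)) (th + 1) U O).
Proof.
move=> m1 mn.
have Hm : (1 <= m < n)%N by lia.
set g := fun s => rising (tau s - (U s)%:R) (O s).
rewrite /Phi.
rewrite (@prod1 _ g 1 n m) //; last first.
  by move=> s Hs nsm; rewrite /g (negbTE nsm) (ltn_eqF (proj2 (andP Hs))) !addn0.
rewrite [X in _ + _ * (X * _ / _)](@prod1 _ g 1 n m) //; last first.
  by move=> s Hs nsm; rewrite /g (negbTE nsm) (ltn_eqF (proj2 (andP Hs))) !addn0 subn0.
rewrite [X in _ = _ * (_ * (X * _ / _))](@prod1 _ g 1 n m) //; last first.
  by move=> s Hs nsm; rewrite /g /upd (negbTE nsm) (ltn_eqF (proj2 (andP Hs))).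
rewrite /upd !eqxx (ltn_eqF mn) eq_sym (ltn_eqF mn) /=.
rewrite !addn0 !addn1 !subn0 !risingS !invfM.
set Pi := \prod_(_ <= _ < _) _.
case: (U m) => [|u].
  by rewrite mul0r addr0 !subr0; ring.
rewrite subn1 /= -natr1.
have -> : tau m - u%:R = tau m - (u%:R + 1) + 1 by ring.
have -> : tau m + 1 - (u%:R + 1) = tau m - (u%:R + 1) + 1 by ring.
ring.
Qed.

End Local.
Arguments Phi {C} n tau th U O.

Section Final.
Variable C : numFieldType.
Variable n : nat.

Lemma local_sum (tau : nat -> C) th r2 m (b : mexp n) : (1 <= m)%N -> (m < r2)%N -> (r2 <= n)%N ->
  dz n r2 m (XA n tau th) b + \sum_(1 <= k < m) sh (unit_exp n m k) (dz n r2 k (XA n tau th)) b =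
  (Phi n tau th (fun i => Defs.under b i + (i == r2))%N (fun i => Defs.over b i + (i == m))%N
   + (Defs.under b m)%:R * Phi n tau th (fun i => Defs.under b i - (i == m) + (i == r2))%N (Defs.over b))
  / (mfact b)%:R.
Proof.
move=> m1 mr rn.
rewrite dz_main //.
have -> : \sum_(1 <= k < m) sh (unit_exp n m k) (dz n r2 k (XA n tau th)) b =
  \sum_(1 <= k < m) (ex b m k)%:R *
     Phi n tau th (fun i => Defs.under b i - (i == m) + (i == r2))%N (Defs.over b) / (mfact b)%:R.
  by apply: eq_big_nat => k Hk; apply: dz_term; lia.
by rewrite -!mulr_suml -natr_sum mulrDl.
Qed.

Lemma bigfps (I : Type) (r : seq I) (P : pred I) (F : I -> fps C n) b :
  (\big[fps_add/fps0]_(i <- r | P i) F i) b = \sum_(i <- r | P i) F i b.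
Proof.
elim: r => [|x r IH]; first by rewrite !big_nil.
by rewrite !big_cons; case: (P x) => //; rewrite /fps_add IH.
Qed.

End Final.

Theorem theorem5p1 (R : realType) (n : nat) (tau : nat -> R[i]) (th : R[i]) :
  (2 <= n)%N ->
  (forall m : nat, th != - m%:R) ->
  (forall r1 r2 : nat, (1 <= r1)%N -> (r1 < r2)%N -> (r2 <= n.-1)%N ->
     dz n r2 r1 (XA n tau th) =
     \big[fps_add/fps0]_(1 <= s < r1.+1)
        fps_scale (tau s) (pmul (Ppath n s r1) (XAsh n tau th s r2)))
  /\
  (forall r : nat, (1 <= r)%N -> (r <= n.-1)%N ->
     dz n n r (XA n tau th) =
     fps_scale (tau n / th)
       (\big[fps_add/fps0]_(1 <= s < r.+1)
          fps_scale (tau s) (pmul (Ppath n s r) (XAsh n tau th s n)))).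
Proof.
move=> n2 _; split.
- move=> r1 r2 r11 r12 r2n; apply: functional_extensionality => b.
  rewrite bigfps.
  have -> : \sum_(1 <= s < r1.+1) fps_scale (tau s) (pmul (Ppath n s r1) (XAsh n tau th s r2)) b =
     \sum_(1 <= s < r1.+1) pmul (Ppath n s r1) (fun x => tau s * XAsh n tau th s r2 x) b.
    by apply: eq_bigr => s _; rewrite pmulZ.
  apply: (@comb _ n (fun k => dz n r2 k (XA n tau th)) (fun s x => tau s * XAsh n tau th s r2 x) r2) => //.
  move=> m m1 mr b'.
  rewrite local_sum //; last by lia.
  rewrite /XAsh (_ : (r2 < n)%N = true); last by apply/idP; lia.
  by rewrite XA_Phi Phi_id1 ?mulrA //; lia.
- move=> r r1 rn; apply: functional_extensionality => b.
  rewrite /fps_scale bigfps mulr_sumr.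
  have -> : \sum_(1 <= s < r.+1) tau n / th * (tau s * pmul (Ppath n s r) (XAsh n tau th s n) b) =
     \sum_(1 <= s < r.+1) pmul (Ppath n s r) (fun x => tau n / th * (tau s * XAsh n tau th s n x)) b.
    by apply: eq_bigr => s _; rewrite !pmulZ.
  apply: (@comb _ n (fun k => dz n n k (XA n tau th)) (fun s x => tau n / th * (tau s * XAsh n tau th s n x)) n); [|lia|lia].
  move=> m m1 mr b'.
  rewrite local_sum //.
  rewrite /XAsh ltnn XA_Phi Phi_id2 //.
  by rewrite !mulrA.
Qed.
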